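(* Let $n\ge2$ and consider $\mathbb R^n\times\bigwedge^2(\mathbb R^n)$ with an adequate scalar product and induced norm $\lVert\cdot\rVert_{\mathrm{eu}}$. There exists a constant $K_1$ such that for every $(n-1)$-tuple $(x_1,\dots,x_{n-1})$ of points of $\mathbb R^n$, every $Y\in\bigwedge^2(\mathbb R^n)$ and every $\varepsilon>0$ with $\mathrm{MinHeight}(x_1,\dots,x_{n-1})\ge\varepsilon$, there exist $v_1,\dots,v_{n-1}\in\mathbb R^n$ such that $$Y=\sum_{j=1}^{n-1}x_j\wedge v_j\quad\text{and}\quad \lVert v_j\rVert_{\mathrm{eu}}\le K_1\frac{\lVert Y\rVert_{\mathrm{eu}}}{\varepsilon}\ \text{for every } j\in\{1,\dots,n-1\}.$$
   Context: $v\wedge w:=v\otimes w-w\otimes v$, and $\bigwedge^2(\mathbb R^n)$ is the span of such tensors. A scalar product on $\mathbb R^n\times\bigwedge^2(\mathbb R^n)$ is adequate if $\mathbb R^n\perp\bigwedge^2(\mathbb R^n)$ and $\langle v_1\wedge w_1,v_2\wedge w_2\rangle=\langle v_1,v_2\rangle\langle w_1,w_2\rangle-\langle v_1,w_2\rangle\langle w_1,v_2\rangle$. $\mathrm{MinHeight}(a_1,\dots,a_m):=\min_j d_{\mathrm{eu}}(a_j,\mathrm{span}(a_1,\dots,\widehat a_j,\dots,a_m))$, where $\widehat a_j$ means $a_j$ is omitted and $d_{\mathrm{eu}}$ is the distance from $\lVert\cdot\rVert_{\mathrm{eu}}$ on $\mathbb R^n$. *)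

(* Defs.v *)
From HB Require Import structures.
From mathcomp Require Import all_boot all_order all_algebra.
From mathcomp Require Import boolp classical_sets reals.
Set Implicit Arguments. Unset Strict Implicit. Unset Printing Implicit Defensive.
Import Order.TTheory GRing.Theory Num.Theory.
Local Open Scope ring_scope.
Local Open Scope classical_set_scope.

(* Vectors of R^n are row vectors; R^n (x) R^n is identified with n x n
   matrices via  v (x) w  |->  v^T w  (entry (i,j) = v_i w_j). *)
Definition wedge (R : realType) (n : nat) (v w : 'rV[R]_n) : 'M[R]_n :=
  v^T *m w - w^T *m v.

Definition Lambda2 (R : realType) (n : nat) (Y : 'M[R]_n) : Prop :=
  exists (m : nat) (a b : 'I_m -> 'rV[R]_n), Y = \sum_(i < m) wedge (a i) (b i).

(* Elements of R^n x Lambda^2(R^n) are pairs (x, Y) with Lambda2 Y. *)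
Definition inV (R : realType) (n : nat) (u : 'rV[R]_n * 'M[R]_n) : Prop :=
  Lambda2 u.2.

Definition padd (R : realType) (n : nat) (u v : 'rV[R]_n * 'M[R]_n) :=
  (u.1 + v.1, u.2 + v.2).
Definition pscale (R : realType) (n : nat) (a : R) (u : 'rV[R]_n * 'M[R]_n) :=
  (a *: u.1, a *: u.2).

Definition adequate (R : realType) (n : nat)
    (sp : 'rV[R]_n * 'M[R]_n -> 'rV[R]_n * 'M[R]_n -> R) : Prop :=
  [/\ (forall u v, inV u -> inV v -> sp u v = sp v u),
      (forall a u v w, inV u -> inV v -> inV w ->
          sp (padd (pscale a u) v) w = a * sp u w + sp v w),
      (forall u, inV u -> u != (0, 0) -> 0 < sp u u),
      (forall x Y, Lambda2 Y -> sp (x, 0) (0, Y) = 0) &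
      (forall v1 w1 v2 w2 : 'rV[R]_n,
          sp (0, wedge v1 w1) (0, wedge v2 w2) =
          sp (v1, 0) (v2, 0) * sp (w1, 0) (w2, 0)
          - sp (v1, 0) (w2, 0) * sp (w1, 0) (v2, 0))].

Definition normeu (R : realType) (n : nat)
    (sp : 'rV[R]_n * 'M[R]_n -> 'rV[R]_n * 'M[R]_n -> R)
    (u : 'rV[R]_n * 'M[R]_n) : R := Num.sqrt (sp u u).

Definition dist_eu (R : realType) (n : nat)
    (sp : 'rV[R]_n * 'M[R]_n -> 'rV[R]_n * 'M[R]_n -> R)
    (a : 'rV[R]_n) (S : set 'rV[R]_n) : R :=
  inf [set normeu sp (a - s, 0) | s in S].

Definition span_omit (R : realType) (n m : nat) (a : 'I_m -> 'rV[R]_n) (j : 'I_m)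
  : set 'rV[R]_n :=
  [set s | exists c : 'I_m -> R, s = \sum_(i < m | i != j) c i *: a i].

(* MinHeight(a_1,...,a_m) = min_j d_eu(a_j, span of the others);
   the min over the finite index set is written as an inf. *)
Definition MinHeight (R : realType) (n m : nat)
    (sp : 'rV[R]_n * 'M[R]_n -> 'rV[R]_n * 'M[R]_n -> R)
    (a : 'I_m -> 'rV[R]_n) : R :=
  inf [set dist_eu sp (a j) (span_omit a j) | j in [set: 'I_m]].

(* Main.v *)
Require Import Defs.
From HB Require Import structures.
From mathcomp Require Import all_boot all_order all_algebra.
From mathcomp Require Import boolp classical_sets reals.
From mathcomp Require Import ring lra.
Import Order.TTheory GRing.Theory Num.Theory.
Local Open Scope ring_scope.
Set Implicit Arguments. Unset Strict Implicit. Unset Printing Implicit Defensive.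
Local Open Scope classical_set_scope.

Section Infra.
Variables (R : realType) (n : nat).
Implicit Types (u w : 'rV[R]_n) (Y Z : 'M[R]_n).

Lemma L2_0 : Lambda2 (0 : 'M[R]_n).
Proof. by exists 0%N, (fun _ => 0), (fun _ => 0); rewrite big_ord0. Qed.

Lemma L2_wedge u w : Lambda2 (wedge u w).
Proof. by exists 1%N, (fun _ => u), (fun _ => w); rewrite big_ord1. Qed.

Lemma L2_add Y Z : Lambda2 Y -> Lambda2 Z -> Lambda2 (Y + Z).
Proof.
move=> [m [a [b ->]]] [k [c [d ->]]].
exists (m + k)%N, (fun i => match split i with inl i' => a i' | inr i' => c i' end),
  (fun i => match split i with inl i' => b i' | inr i' => d i' end).
rewrite big_split_ord /=; congr (_ + _); apply: eq_bigr => i _.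
  by rewrite -[lshift _ _]/(unsplit (inl i)) unsplitK.
by rewrite -[rshift _ _]/(unsplit (inr i)) unsplitK.
Qed.

Lemma wedgeZl a u w : wedge (a *: u) w = a *: wedge u w.
Proof. by rewrite /wedge linearZ /= -scalemxAl -scalemxAr scalerBr. Qed.

Lemma L2_scale a Y : Lambda2 Y -> Lambda2 (a *: Y).
Proof.
move=> [m [c [d ->]]]; exists m, (fun i => a *: c i), d.
by rewrite scaler_sumr; apply: eq_bigr => i _; rewrite wedgeZl.
Qed.

Lemma wedgeZr a u w : wedge u (a *: w) = a *: wedge u w.
Proof. by rewrite /wedge !linearZ /= -scalemxAl scalerBr. Qed.
Lemma wedgeDl u1 u2 w : wedge (u1 + u2) w = wedge u1 w + wedge u2 w.
Proof. by rewrite /wedge !linearD /= ?mulmxDl ?mulmxDr ?opprD addrACA. Qed.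
Lemma wedgeDr u w1 w2 : wedge u (w1 + w2) = wedge u w1 + wedge u w2.
Proof. by rewrite /wedge !linearD /= ?mulmxDl ?mulmxDr ?opprD addrACA. Qed.
Lemma wedge0l w : wedge 0 w = 0.
Proof. by rewrite -(scale0r (0:'rV[R]_n)) wedgeZl scale0r. Qed.
Lemma wedge0r w : wedge w 0 = 0.
Proof. by rewrite -(scale0r (0:'rV[R]_n)) wedgeZr scale0r. Qed.
Lemma wedgeNl u w : wedge (- u) w = - wedge u w.
Proof. by rewrite -scaleN1r wedgeZl scaleN1r. Qed.
Lemma wedgeNr u w : wedge u (- w) = - wedge u w.
Proof. by rewrite -scaleN1r wedgeZr scaleN1r. Qed.
Lemma wedgeBl u1 u2 w : wedge (u1 - u2) w = wedge u1 w - wedge u2 w.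
Proof. by rewrite wedgeDl wedgeNl. Qed.
Lemma wedgeBr u w1 w2 : wedge u (w1 - w2) = wedge u w1 - wedge u w2.
Proof. by rewrite wedgeDr wedgeNr. Qed.
Lemma wedgeC u w : wedge u w = - wedge w u.
Proof. by rewrite /wedge opprB. Qed.
Lemma wedgeii u : wedge u u = 0.
Proof. by rewrite /wedge subrr. Qed.
Lemma wedge_suml I (r : seq I) (P : pred I) (F : I -> 'rV[R]_n) w :
  wedge (\sum_(i <- r | P i) F i) w = \sum_(i <- r | P i) wedge (F i) w.
Proof. exact: (big_morph (fun u => wedge u w) (fun a b => wedgeDl a b w) (wedge0l w)). Qed.
Lemma wedge_sumr I (r : seq I) (P : pred I) (F : I -> 'rV[R]_n) w :
  wedge w (\sum_(i <- r | P i) F i) = \sum_(i <- r | P i) wedge w (F i).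
Proof. exact: (big_morph (fun u => wedge w u) (fun a b => wedgeDr w a b) (wedge0r w)). Qed.

Lemma L2_sum I (r : seq I) (P : pred I) (F : I -> 'M[R]_n) :
  (forall i, Lambda2 (F i)) -> Lambda2 (\sum_(i <- r | P i) F i).
Proof.
move=> H; elim: r => [|a r IH]; first by rewrite big_nil; exact: L2_0.
rewrite big_cons; case: (P a) => //; exact: L2_add.
Qed.
End Infra.
Arguments L2_0 {R n}.

Section IP.
Variables (R : realType) (n : nat).
Variable sp : 'rV[R]_n * 'M[R]_n -> 'rV[R]_n * 'M[R]_n -> R.
Hypothesis Had : adequate sp.
Implicit Types (u v w z : 'rV[R]_n) (Y Z W : 'M[R]_n).

Definition ip u w := sp (u, 0) (w, 0).
Definition spL Y Z := sp (0, Y) (0, Z).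

Lemma ip_sym u w : ip u w = ip w u.
Proof. by case: Had => H _ _ _ _; apply: H; exact: L2_0. Qed.

Lemma ipDZl a u v w : ip (a *: u + v) w = a * ip u w + ip v w.
Proof.
case: Had => _ H _ _ _; have := H a (u, 0) (v, 0) (w, 0) L2_0 L2_0 L2_0.
by rewrite /padd /pscale /= scaler0 addr0.
Qed.
Lemma ip0l w : ip 0 w = 0.
Proof. have := ipDZl 1 0 0 w; rewrite scaler0 addr0 mul1r => /eqP; rewrite -subr_eq0.
by rewrite opprD addrA subrr sub0r oppr_eq0 => /eqP. Qed.
Lemma ipZl a u w : ip (a *: u) w = a * ip u w.
Proof. by have := ipDZl a u 0 w; rewrite addr0 ip0l addr0. Qed.
Lemma ipDl u v w : ip (u + v) w = ip u w + ip v w.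
Proof. by have := ipDZl 1 u v w; rewrite scale1r mul1r. Qed.
Lemma ipNl u w : ip (- u) w = - ip u w.
Proof. by rewrite -scaleN1r ipZl mulN1r. Qed.
Lemma ipBl u v w : ip (u - v) w = ip u w - ip v w.
Proof. by rewrite ipDl ipNl. Qed.
Lemma ip0r w : ip w 0 = 0.
Proof. by rewrite ip_sym ip0l. Qed.
Lemma ipZr a u w : ip w (a *: u) = a * ip w u.
Proof. by rewrite ip_sym ipZl ip_sym. Qed.
Lemma ipDr u v w : ip w (u + v) = ip w u + ip w v.
Proof. by rewrite ip_sym ipDl !(ip_sym w). Qed.
Lemma ipNr u w : ip w (- u) = - ip w u.
Proof. by rewrite ip_sym ipNl ip_sym. Qed.
Lemma ipBr u v w : ip w (u - v) = ip w u - ip w v.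
Proof. by rewrite ipDr ipNr. Qed.
Lemma ip_suml I (r : seq I) (P : pred I) (F : I -> 'rV[R]_n) w :
  ip (\sum_(i <- r | P i) F i) w = \sum_(i <- r | P i) ip (F i) w.
Proof. exact: (big_morph (fun u => ip u w) (fun a b => ipDl a b w) (ip0l w)). Qed.
Lemma ip_sumr I (r : seq I) (P : pred I) (F : I -> 'rV[R]_n) w :
  ip w (\sum_(i <- r | P i) F i) = \sum_(i <- r | P i) ip w (F i).
Proof. exact: (big_morph (fun u => ip w u) (fun a b => ipDr a b w) (ip0r w)). Qed.

Lemma ip_ge0 u : 0 <= ip u u.
Proof.
have [->|/negPf u0] := eqVneq u 0; first by rewrite ip0l.
case: Had => _ _ H _ _; apply/ltW/H; first exact: L2_0.
by rewrite xpair_eqE u0.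
Qed.
Lemma ip_eq0 u : ip u u = 0 -> u = 0.
Proof.
have [->|/negPf u0] := eqVneq u 0 => // e.
case: Had => _ _ H _ _; have := H (u, 0) L2_0; rewrite xpair_eqE u0 /= => /(_ isT).
by rewrite -/(ip u u) e ltxx.
Qed.

Lemma spL_sym Y Z : Lambda2 Y -> Lambda2 Z -> spL Y Z = spL Z Y.
Proof. by case: Had => H _ _ _ _ hY hZ; apply: H. Qed.
Lemma spLDZl a Y Z W : Lambda2 Y -> Lambda2 Z -> Lambda2 W ->
  spL (a *: Y + Z) W = a * spL Y W + spL Z W.
Proof.
case: Had => _ H _ _ _ hY hZ hW; have := H a (0, Y) (0, Z) (0, W) hY hZ hW.
by rewrite /padd /pscale /= scaler0 addr0.
Qed.
Lemma spL0l W : Lambda2 W -> spL 0 W = 0.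
Proof. move=> hW; have := spLDZl 1 L2_0 L2_0 hW; rewrite scaler0 addr0 mul1r => /eqP; rewrite -subr_eq0.
by rewrite opprD addrA subrr sub0r oppr_eq0 => /eqP. Qed.
Lemma spLDl Y Z W : Lambda2 Y -> Lambda2 Z -> Lambda2 W -> spL (Y + Z) W = spL Y W + spL Z W.
Proof. by move=> hY hZ hW; have := spLDZl 1 hY hZ hW; rewrite scale1r mul1r. Qed.
Lemma spLZl a Y W : Lambda2 Y -> Lambda2 W -> spL (a *: Y) W = a * spL Y W.
Proof. by move=> hY hW; have := spLDZl a hY L2_0 hW; rewrite addr0 spL0l // addr0. Qed.
Lemma spL_suml I (r : seq I) (P : pred I) (F : I -> 'M[R]_n) W :
  (forall i, Lambda2 (F i)) -> Lambda2 W ->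
  spL (\sum_(i <- r | P i) F i) W = \sum_(i <- r | P i) spL (F i) W.
Proof.
move=> hF hW; elim: r => [|a r IH]; first by rewrite !big_nil spL0l.
rewrite !big_cons; case: (P a) => //; rewrite spLDl //; first by rewrite IH.
exact: L2_sum.
Qed.
Lemma spL_ge0 Y : Lambda2 Y -> 0 <= spL Y Y.
Proof.
move=> hY; have [->|/negPf u0] := eqVneq Y 0; first by rewrite spL0l //; exact: L2_0.
case: Had => _ _ H _ _; apply/ltW/H => //.
by rewrite xpair_eqE u0 andbF.
Qed.
Lemma spL_wedge a b c d :
  spL (wedge a b) (wedge c d) = ip a c * ip b d - ip a d * ip b c.
Proof. by case: Had => _ _ _ _ H; rewrite /spL H. Qed.

End IP.

Lemma wedgeE (R : realType) (n : nat) (u w : 'rV[R]_n) r s :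
  wedge u w r s = u 0 r * w 0 s - w 0 r * u 0 s.
Proof. by rewrite /wedge !mxE !big_ord1 !mxE. Qed.

Section Main.
Variables (R : realType) (n : nat).
Variable sp : 'rV[R]_n * 'M[R]_n -> 'rV[R]_n * 'M[R]_n -> R.
Hypothesis Had : adequate sp.
Variables (m : nat) (x : 'I_m -> 'rV[R]_n).
Implicit Types (u v w z a b : 'rV[R]_n) (Y Z W : 'M[R]_n).

Local Notation ip := (ip sp).
Local Notation spL := (spL sp).

Definition Gam : 'M[R]_m := \matrix_(i, k) ip (x i) (x k).
Definition Mi := invmx Gam.
Definition y j := \sum_k Mi j k *: x k.
Definition Pj z := \sum_j ip z (y j) *: x j.
Definition iot t a b := ip a t *: b - ip b t *: a.

Lemma PjDZ c u v : Pj (c *: u + v) = c *: Pj u + Pj v.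
Proof.
rewrite /Pj scaler_sumr -big_split; apply: eq_bigr => j _.
by rewrite (ipDZl Had) scalerDl scalerA.
Qed.
Lemma Pj0 : Pj 0 = 0.
Proof. by rewrite /Pj big1 // => j _; rewrite (ip0l Had) scale0r. Qed.
Lemma PjD u v : Pj (u + v) = Pj u + Pj v.
Proof. by rewrite -[u]scale1r PjDZ !scale1r. Qed.
Lemma PjZ c u : Pj (c *: u) = c *: Pj u.
Proof. by rewrite -[c *: u]addr0 PjDZ Pj0 addr0. Qed.
Lemma PjN u : Pj (- u) = - Pj u.
Proof. by rewrite -scaleN1r PjZ scaleN1r. Qed.
Lemma PjB u v : Pj (u - v) = Pj u - Pj v.
Proof. by rewrite PjD PjN. Qed.
Lemma Pj_sum I (r : seq I) (P : pred I) (F : I -> 'rV[R]_n) :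
  Pj (\sum_(i <- r | P i) F i) = \sum_(i <- r | P i) Pj (F i).
Proof. exact: (big_morph Pj PjD Pj0). Qed.

Lemma sum_wedge_Pj c w :
  \sum_j ip c (y j) *: wedge (x j) w = wedge (Pj c) w.
Proof. by rewrite /Pj wedge_suml; apply: eq_bigr => j _; rewrite wedgeZl. Qed.

Lemma Gam_sym i k : Gam i k = Gam k i.
Proof. by rewrite !mxE (ip_sym Had). Qed.

Hypothesis Gu : Gam \in unitmx.

Lemma ip_y_x j i : ip (y j) (x i) = (j == i)%:R.
Proof.
rewrite /y (ip_suml Had).
have := congr1 (fun A : 'M_m => A j i) (mulVmx Gu); rewrite !mxE => <-.
by apply: eq_bigr => k _; rewrite (ipZl Had) !mxE.
Qed.

Lemma ip_Pj_x z i : ip (Pj z) (x i) = ip z (x i).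
Proof.
transitivity (\sum_k ip z (x k) * (Gam *m Mi) i k).
  rewrite /Pj (ip_suml Had).
  under eq_bigr => j _ do rewrite (ipZl Had) /y (ip_sumr Had) big_distrl /=.
  rewrite exchange_big /=; apply: eq_bigr => k _; rewrite mxE big_distrr /=.
  apply: eq_bigr => j _; rewrite (ipZr Had) !mxE (ip_sym Had (x j)); ring.
rewrite /Mi mulmxV //; under eq_bigr do rewrite mxE.
rewrite (bigD1 i) //= eqxx mulr1 big1 ?addr0 // => k /negPf ki.
by rewrite eq_sym ki mulr0.
Qed.

Lemma ip_PP z : ip (Pj z) (Pj z) = ip (Pj z) z.
Proof.
rewrite [X in ip _ X = _]/Pj (ip_sumr Had) [X in _ = ip X _]/Pj (ip_suml Had); apply: eq_bigr => j _.
by rewrite (ipZr Had) (ipZl Had) ip_Pj_x (ip_sym Had (x j)).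
Qed.

Lemma Q_perp z i : ip (z - Pj z) (x i) = 0.
Proof. by rewrite (ipBl Had) ip_Pj_x subrr. Qed.

Lemma ip_half u : ip (u - 2^-1 *: Pj u) (u - 2^-1 *: Pj u) <= ip u u.
Proof.
rewrite !(ipBl Had) !(ipBr Had) !(ipZl Had) !(ipZr Had) (ip_sym Had u (Pj u)) -ip_PP.
have := ip_ge0 Had (Pj u); set p := ip (Pj u) (Pj u); move=> hp.
lra.
Qed.


Lemma K3 (hn : (n < m + 2)%N) u w :
  (forall i, ip u (x i) = 0) -> (forall i, ip w (x i) = 0) -> wedge u w = 0.
Proof.
move=> hu hw.
pose g (k : 'I_2) := if k == ord0 then u else w.
pose f (i : 'I_(m + 2)) := match split i with inl k => x k | inr k => g k end.
pose A : 'M_(m + 2, n) := \matrix_i f i.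
have nfree : ~~ row_free A.
  rewrite /row_free; apply/negP => /eqP e; have := rank_leq_col A.
  by rewrite e leqNgt hn.
have [i0 hi0] : exists i, row i (kermx A) != 0.
  case: (pickP (fun i => row i (kermx A) != 0)) => [i hi|none]; first by exists i.
  exfalso; move/negP: nfree; apply; rewrite -kermx_eq0; apply/eqP/row_matrixP => i.
  by have := none i => /= /negbFE/eqP ->; rewrite row0.
set c := row i0 (kermx A) in hi0.
have hc : c *m A = 0 by rewrite /c -row_mul mulmx_ker row0.
have hz : \sum_i c 0 i *: f i = 0.
  transitivity (c *m A); last exact: hc.
  rewrite mulmx_sum_row; apply: eq_bigr => i _; by rewrite rowK.
have el k : f (lshift 2 k) = x k by rewrite /f -[lshift _ _]/(unsplit (inl k)) unsplitK.
have er k : f (rshift m k) = g k by rewrite /f -[rshift _ _]/(unsplit (inr k)) unsplitK.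
rewrite big_split_ord /= big_ord_recl big_ord1 !er /g /= in hz.
rewrite (eq_bigr (fun k => c 0 (lshift 2 k) *: x k)) in hz; last by move=> k _; rewrite el.
set al := c 0 (rshift m ord0) in hz; set be := c 0 (rshift m (lift ord0 ord0)) in hz.
have c1z k : c 0 (lshift 2 k) = 0.
  pose c1 := \row_k c 0 (lshift 2 k).
  have : c1 *m Gam = 0.
    apply/rowP => l; rewrite !mxE.
    have := congr1 (fun z => ip z (x l)) hz.
    rewrite (ip0l Had) !(ipDl Had) (ip_suml Had) !(ipZl Had) hu hw !mulr0 !addr0 => e.
    apply: etrans e; by apply: eq_bigr => k' _; rewrite !mxE (ipZl Had).
  move=> /(congr1 (mulmx^~ Mi)); rewrite mulmxK // mul0mx => e.
  by have := congr1 (fun r : 'rV_m => r 0 k) e; rewrite !mxE.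
rewrite big1 ?add0r in hz; last by move=> k _; rewrite c1z scale0r.
have [a0|a0] := eqVneq al 0.
  have [b0|b0] := eqVneq be 0.
    exfalso; move/negP: hi0; apply; apply/eqP/rowP => i; rewrite [RHS]mxE.
    case: (splitP i) => [k ek|k ek].
      by have -> : i = lshift 2 k by apply: val_inj.
    move: k ek; case => [[|[|//]] hk] ek.
      by have -> : i = rshift m ord0 by apply: val_inj; rewrite /= ek addn0.
    by have -> : i = rshift m (lift ord0 ord0) by apply: val_inj; rewrite /= ek.
  move/eqP: hz; rewrite addrC addr_eq0 => /eqP hz.
  have : be *: wedge u w = 0 by rewrite -wedgeZr hz wedgeNr wedgeZr wedgeii scaler0 oppr0.
  by move/eqP; rewrite scaler_eq0 (negPf b0) => /eqP.
move/eqP: hz; rewrite addr_eq0 => /eqP hz.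
have : al *: wedge u w = 0 by rewrite -wedgeZl hz wedgeNl wedgeZl wedgeii scaler0 oppr0.
by move/eqP; rewrite scaler_eq0 (negPf a0) => /eqP.
Qed.


Lemma K4 (hn : (n < m + 2)%N) a b :
  \sum_j wedge (x j) (iot (y j) a b - 2^-1 *: Pj (iot (y j) a b)) = wedge a b.
Proof.
have E j : wedge (x j) (iot (y j) a b - 2^-1 *: Pj (iot (y j) a b)) =
    ip a (y j) *: wedge (x j) (b - 2^-1 *: Pj b)
    - ip b (y j) *: wedge (x j) (a - 2^-1 *: Pj a).
  apply/matrixP => r s; rewrite /iot PjB !PjZ !(wedgeE, mxE); ring.
under eq_bigr do rewrite E.
rewrite sumrB !sum_wedge_Pj.
have K := K3 hn (Q_perp a) (Q_perp b).
apply/matrixP => r s; have := congr1 (fun M : 'M_n => M r s) K.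
rewrite !(wedgeE, mxE) => K'.
lra.
Qed.

End Main.

Section Bounds.
Variables (R : realType) (n : nat).
Variable sp : 'rV[R]_n * 'M[R]_n -> 'rV[R]_n * 'M[R]_n -> R.
Hypothesis Had : adequate sp.
Local Notation ip := (ip sp).
Local Notation spL := (spL sp).

Lemma N3 k (A B : 'I_k -> 'rV[R]_n) t :
  ip (\sum_i iot sp t (A i) (B i)) (\sum_i iot sp t (A i) (B i))
  <= ip t t * spL (\sum_i wedge (A i) (B i)) (\sum_i wedge (A i) (B i)).
Proof.
set u := \sum_i iot sp t (A i) (B i); set Y := \sum_i wedge (A i) (B i).
have hY : Lambda2 Y by exists k, A, B.
set Z := wedge t u.
have hZ : Lambda2 Z by exact: L2_wedge.
have h1 : spL Y Z = ip u u.
  rewrite /Y (spL_suml Had) //; last by move=> i; exact: L2_wedge.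
  rewrite {1}/u (ip_suml Had); apply: eq_bigr => i _.
  rewrite /Z (spL_wedge Had) /iot (ipBl Had) !(ipZl Had); ring.
have h2 : spL Z Z = ip t t * ip u u - ip t u * ip u t by rewrite (spL_wedge Had).
have [t0|t0] := eqVneq t 0.
  have -> : u = 0.
    by rewrite /u big1 // => i _; rewrite /iot t0 !(ip0r Had) !scale0r subrr.
  by rewrite t0 !(ip0l Had) mul0r.
have hT : 0 < ip t t.
  rewrite lt_def ip_ge0 // andbT; apply/eqP => e; move: t0; by rewrite (ip_eq0 Had e) eqxx.
set T := ip t t in hT h2 *; set s := T^-1.
have hW : Lambda2 ((- s) *: Z + Y) by apply: L2_add => //; exact: L2_scale.
have hq := spL_ge0 Had hW.
rewrite (spLDZl Had) // (spL_sym Had hZ hW) (spL_sym Had hY hW) !(spLDZl Had) // in hq.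
rewrite (spL_sym Had hZ hY) h1 h2 (ip_sym Had u t) in hq.
have hs : s * T = 1 by rewrite /s mulVf // gt_eqF.
have hs0 : 0 < s by rewrite /s invr_gt0.
set L := spL Y Y in hq *; set U := ip u u in hq *; set V := ip t u in hq *.
have e : T * (- s * (- s * (T * U - V * V) + U) + (- s * U + L)) = T * L - U - s * (V * V).
  rewrite /s; field; by rewrite gt_eqF.
have : 0 <= T * L - U - s * (V * V) by rewrite -e; apply: mulr_ge0; [exact: ltW | exact: hq].
have : 0 <= s * (V * V) by apply: mulr_ge0; [exact: ltW | rewrite -expr2; exact: sqr_ge0].
lra.
Qed.

Variables (m : nat) (x : 'I_m -> 'rV[R]_n).

Lemma combo (c : 'I_m -> R) j : c j != 0 ->
  \sum_k c k *: x k = c j *: (x j - \sum_(i < m | i != j) (- c i / c j) *: x i).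
Proof.
move=> cj; rewrite (bigD1 j) //= scalerBr scaler_sumr -sumrN; congr (_ + _).
apply: eq_bigr => i _; rewrite scalerA -scaleNr; congr (_ *: _); field; exact: cj.
Qed.

Lemma nonzero_row p q (A : 'M[R]_(p, q)) : A != 0 -> exists i, row i A != 0.
Proof.
move=> nA; case: (pickP (fun i => row i A != 0)) => [i hi|none]; first by exists i.
exfalso; move/negP: nA; apply; apply/eqP/row_matrixP => i.
by have := none i => /= /negbFE/eqP ->; rewrite row0.
Qed.

Lemma nonzero_entry p (c : 'rV[R]_p) : c != 0 -> exists j, c 0 j != 0.
Proof.
move=> nc; case: (pickP (fun j => c 0 j != 0)) => [j hj|none]; first by exists j.
exfalso; move/negP: nc; apply; apply/eqP/rowP => j; rewrite mxE.
by have := none j => /= /negbFE/eqP ->.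
Qed.

Variable eps : R.
Hypothesis he : 0 < eps.
Hypothesis Hh : forall j (c : 'I_m -> R),
  eps ^+ 2 <= ip (x j - \sum_(i < m | i != j) c i *: x i) (x j - \sum_(i < m | i != j) c i *: x i).

Lemma Gam_unit : Gam sp x \in unitmx.
Proof.
apply/negPn/negP => nu; rewrite -row_free_unit -kermx_eq0 in nu.
have [i0 hi0] := nonzero_row nu.
set c := row i0 (kermx (Gam sp x)) in hi0.
have hc : c *m Gam sp x = 0 by rewrite /c -row_mul mulmx_ker row0.
have [j cj] := nonzero_entry hi0.
set w := \sum_k c 0 k *: x k.
have hw : ip w w = 0.
  rewrite {2}/w (ip_sumr Had) big1 // => i _.
  rewrite (ipZr Had) /w (ip_suml Had).
  have := congr1 (fun r : 'rV_m => r 0 i) hc; rewrite !mxE => e.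
  have e' : \sum_k ip (c 0 k *: x k) (x i) = 0.
    by apply: (etrans _ e); apply: eq_bigr => k _; rewrite (ipZl Had) !mxE.
  by rewrite e' mulr0.
have w0 := ip_eq0 Had hw.
move: w0; rewrite /w (combo cj) => /eqP; rewrite scaler_eq0 (negPf cj) /= => /eqP d0.
have := Hh j (fun i => - c 0 i / c 0 j); rewrite d0 (ip0l Had).
have : 0 < eps ^+ 2 by rewrite exprn_gt0.
lra.
Qed.

Lemma N4 j : eps ^+ 2 * ip (y sp x j) (y sp x j) <= 1.
Proof.
have Gu := Gam_unit.
have e : ip (y sp x j) (y sp x j) = Mi sp x j j.
  rewrite [X in ip X _]/y (ip_suml Had) (bigD1 j) //= big1.
    by rewrite addr0 (ipZl Had) (ip_sym Had) (ip_y_x Had Gu) eqxx mulr1.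
  by move=> i ij; rewrite (ipZl Had) (ip_sym Had) (ip_y_x Had Gu) eq_sym (negPf ij) mulr0.
have [M0|M0] := eqVneq (Mi sp x j j) 0.
  by rewrite e M0 mulr0 ler01.
have hd := Hh j (fun i => - Mi sp x j i / Mi sp x j j).
have ey : y sp x j = Mi sp x j j *: (x j - \sum_(i < m | i != j) (- Mi sp x j i / Mi sp x j j) *: x i).
  by rewrite /y (combo M0).
have hpos : 0 <= ip (y sp x j) (y sp x j) := ip_ge0 Had _.
move: hpos; rewrite e => hpos.
have : ip (y sp x j) (y sp x j) = Mi sp x j j ^+ 2 * ip (x j - \sum_(i < m | i != j) (- Mi sp x j i / Mi sp x j j) *: x i) (x j - \sum_(i < m | i != j) (- Mi sp x j i / Mi sp x j j) *: x i).
  by rewrite {1}ey (ipZl Had) {1}ey (ipZr Had) expr2 mulrA.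
rewrite e; set D := ip _ _ in hd *; set M := Mi sp x j j in M0 hpos *.
move=> eM.
have Mp : 0 < M by rewrite lt_def M0 hpos.
nra.
Qed.

End Bounds.

Lemma dist_le (R : realType) (n : nat) sp (a : 'rV[R]_n) (S : set 'rV[R]_n) s :
  S s -> dist_eu sp a S <= normeu sp (a - s, 0).
Proof.
move=> Ss; rewrite /dist_eu.
have H : has_lbound [set normeu sp (a - s, 0) | s in S].
  by exists 0 => _ [s' _ <-]; exact: sqrtr_ge0.
by apply: (ge_inf H); exists s.
Qed.

Lemma dist_ge0 (R : realType) (n : nat) sp (a : 'rV[R]_n) (S : set 'rV[R]_n) s :
  S s -> 0 <= dist_eu sp a S.
Proof.
move=> Ss; rewrite /dist_eu; apply: lb_le_inf; first by exists (normeu sp (a - s, 0)), s.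
by move=> _ [s' _ <-]; exact: sqrtr_ge0.
Qed.

Theorem mainTheorem9 (R : realType) (n : nat)
    (sp : 'rV[R]_n * 'M[R]_n -> 'rV[R]_n * 'M[R]_n -> R) :
  (2 <= n)%N -> adequate sp ->
  exists K1 : R,
    forall (x : 'I_n.-1 -> 'rV[R]_n) (Y : 'M[R]_n) (eps : R),
      Lambda2 Y -> 0 < eps -> eps <= MinHeight sp x ->
      exists v : 'I_n.-1 -> 'rV[R]_n,
        Y = \sum_(j < n.-1) wedge (x j) (v j) /\
        forall j : 'I_n.-1, normeu sp (v j, 0) <= K1 * normeu sp (0, Y) / eps.
Proof.
move=> hn2 Had; exists 1 => x Y eps hY he hMH.
have hn : (n < n.-1 + 2)%N by rewrite addn2; case: (n) hn2.
have Hh : forall j (c : 'I_n.-1 -> R),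
    eps ^+ 2 <= ip sp (x j - \sum_(i < n.-1 | i != j) c i *: x i)
                      (x j - \sum_(i < n.-1 | i != j) c i *: x i).
  move=> j c.
  set d := x j - _.
  have h1 : MinHeight sp x <= dist_eu sp (x j) (span_omit x j).
    rewrite /MinHeight.
    have H : has_lbound [set dist_eu sp (x j0) (span_omit x j0) | j0 in [set: 'I_n.-1]].
      exists 0 => _ [j' _ <-]; apply: (@dist_ge0 _ _ _ _ _ (\sum_(i < n.-1 | i != j') 0 *: x i)).
      by exists (fun=> 0).
    by apply: (ge_inf H); exists j.
  have h2 : dist_eu sp (x j) (span_omit x j) <= normeu sp (d, 0).
    by apply: dist_le; exists c.
  have h3 : eps <= Num.sqrt (ip sp d d) by rewrite /ip; apply: le_trans hMH (le_trans h1 h2).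
  have h4 := sqr_sqrtr (ip_ge0 Had d).
  have h5 := sqrtr_ge0 (ip sp d d).
  set q := Num.sqrt _ in h3 h4 h5.
  rewrite -h4; nra.
have Gu := Gam_unit Had he Hh.
case: hY => k [A [B eY]].
pose u j := \sum_i iot sp (y sp x j) (A i) (B i).
exists (fun j => u j - 2^-1 *: Pj sp x (u j)); split.
  rewrite eY.
  under [RHS]eq_bigr => j _ do rewrite /u (Pj_sum Had) scaler_sumr -sumrB wedge_sumr.
  rewrite exchange_big /=; apply: eq_bigr => i _.
  by rewrite (K4 Had Gu hn).
move=> j; rewrite mul1r ler_pdivlMr //.
have h1 := ip_half Had Gu (u j).
have h2 := N3 Had A B (y sp x j).
have h3 := N4 Had he Hh j.
rewrite -eY -/(u j) in h2.
have hyy := ip_ge0 Had (y sp x j).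
have hL := spL_ge0 Had (ex_intro _ k (ex_intro _ A (ex_intro _ B eY)) : Lambda2 Y).
rewrite /normeu.
set vv := ip sp (u j - 2^-1 *: Pj sp x (u j)) (u j - 2^-1 *: Pj sp x (u j)) in h1.
have hvv : 0 <= vv := ip_ge0 Had _.
rewrite -/(ip sp _ _) -/vv -/(spL sp Y Y).
set L := spL sp Y Y in h2 hL *.
set U := ip sp (u j) (u j) in h1 h2.
set T := ip sp (y sp x j) (y sp x j) in h2 h3 hyy.
have h4 : vv * eps ^+ 2 <= L by nra.
have s1 := sqr_sqrtr hvv; have s2 := sqr_sqrtr hL.
have s1p := sqrtr_ge0 vv; have s2p := sqrtr_ge0 L.
set a := Num.sqrt vv in s1 s1p *; set b := Num.sqrt L in s2 s2p *.
have ht : 0 <= a * eps by rewrite mulr_ge0 // ltW.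
have hsq : (a * eps) ^+ 2 <= b ^+ 2 by rewrite exprMn s1 s2.
set t := a * eps in ht hsq *.
nra.
Qed.
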